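(* Let $S$ be a simple extension of an infinite field $k$ of characteristic different from $2$, and let $c\in S^*$. Then the set $V_c=\{b\in S^*\mid cb^2\text{ is a primitive element of }S/k\}$ is non-empty and open in $S^*$.
   Context: A $k$-algebra $S$ is a simple extension of degree $n$ of the field $k$ if there is $c\in S^*$ (a primitive element) such that $1,c,\dots,c^{n-1}$ is a $k$-basis of $S$. $S$ is identified with $\mathbb{A}^n(k)$ via a $k$-basis and given the Zariski topology; $S^*$ carries the subspace topology. *)

(* Defs.v *)
From HB Require Import structures.
From mathcomp Require Import all_boot all_order all_algebra all_field.
From mathcomp Require Import mpoly.
Set Implicit Arguments. Unset Strict Implicit. Unset Printing Implicit Defensive.
Import GRing.Theory.
Local Open Scope ring_scope.

(* A k-algebra S is modelled as a finite-dimensional unital k-algebra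
   (falgType k). *)

Definition primitive (k : fieldType) (S : falgType k) (x : S) : bool :=
  (x \is a GRing.unit) &&
  basis_of fullv [seq x ^+ i | i <- iota 0 (\dim {: S})].

Definition simple_ext (k : fieldType) (S : falgType k) : Prop :=
  exists c : S, primitive c.

(* Coordinates of x in the fixed basis vbasis {:S}: identification S = A^n(k). *)
Definition coords (k : fieldType) (S : falgType k) (x : S) : 'I_(\dim {: S}) -> k :=
  fun i => coord (vbasis fullv) i x.

(* Zariski-open subsets of S = A^n(k): complements of common zero sets of a
   family of polynomials in the coordinates. *)
Definition zariski_open (k : fieldType) (S : falgType k) (U : S -> Prop) : Prop :=
  exists P : {mpoly k[\dim {: S}]} -> Prop,
    forall x : S, U x <-> exists p, P p /\ p.@[coords x] != 0.

Definition open_in_units (k : fieldType) (S : falgType k) (V : S -> Prop) : Prop :=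
  exists U : S -> Prop, zariski_open U /\
    forall x : S, x \is a GRing.unit -> (V x <-> U x).

Definition infinite_field (k : fieldType) : Prop :=
  forall s : seq k, exists x : k, x \notin s.

(* Main.v *)
Require Import Defs.
From HB Require Import structures.
From mathcomp Require Import all_boot all_order all_algebra all_field.
From mathcomp Require Import mpoly.
From mathcomp Require Import ring perm.
Set Implicit Arguments. Unset Strict Implicit. Unset Printing Implicit Defensive.
Import GRing.Theory.
Local Open Scope ring_scope.


Definition fext (k : fieldType) (X : Type) (P : (X -> k) -> Prop) :=
  forall f g, (forall x, f x = g x) -> P f -> P g.

Record rclosed (k : fieldType) (X : Type) (P : (X -> k) -> Prop) : Prop := RC {
  rc_ext : fext P;
  rc_cst : forall a, P (fun _ => a);
  rc_add : forall f g, P f -> P g -> P (fun x => f x + g x);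
  rc_mul : forall f g, P f -> P g -> P (fun x => f x * g x) }.

Record iclosed (k : fieldType) (X : Type) (P J : (X -> k) -> Prop) : Prop := IC {
  ic_ext : fext J;
  ic_0 : J (fun _ => 0);
  ic_add : forall f g, J f -> J g -> J (fun x => f x + g x);
  ic_mul : forall f g, P f -> J g -> J (fun x => f x * g x) }.

Lemma rc_ic (k : fieldType) (X : Type) (P : (X -> k) -> Prop) :
  rclosed P -> iclosed P P.
Proof. by case=> e c a m; split=> //; apply: c. Qed.

Lemma ic_sum (k : fieldType) (X : Type) (P J : (X -> k) -> Prop) (I : Type)
  (r : seq I) (F : I -> X -> k) : iclosed P J ->
  (forall i, J (F i)) -> J (fun x => \sum_(i <- r) F i x).
Proof.
move=> [e z a _] HF; elim: r => [|i r IH].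
  by apply: e z => x; rewrite big_nil.
by apply: e (a _ _ (HF i) IH) => x; rewrite big_cons.
Qed.

Lemma rc_prod (k : fieldType) (X : Type) (P : (X -> k) -> Prop) (I : Type)
  (r : seq I) (F : I -> X -> k) : rclosed P ->
  (forall i, P (F i)) -> P (fun x => \prod_(i <- r) F i x).
Proof.
move=> [e c a m] HF; elim: r => [|i r IH].
  by apply: e (c 1) => x; rewrite big_nil.
by apply: e (m _ _ (HF i) IH) => x; rewrite big_cons.
Qed.

Lemma ic_neg (k : fieldType) (X : Type) (P J : (X -> k) -> Prop) f :
  rclosed P -> iclosed P J -> J f -> J (fun x => - f x).
Proof.
move=> [_ c _ _] [e _ _ m] Jf; apply: e (m _ _ (c (-1)) Jf) => x.
by rewrite mulN1r.
Qed.

Lemma ic_prodB (k : fieldType) (X : Type) (P J : (X -> k) -> Prop) (I : Type)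
  (r : seq I) (F G : I -> X -> k) : rclosed P -> iclosed P J ->
  (forall i, P (F i)) -> (forall i, P (G i)) ->
  (forall i, J (fun x => F i x - G i x)) ->
  J (fun x => \prod_(i <- r) F i x - \prod_(i <- r) G i x).
Proof.
move=> RP IJ PF PG JFG; have [e z a m] := IJ.
elim: r => [|i r IH].
  by apply: e z => x; rewrite !big_nil subrr.
have h1 := m _ _ (PF i) IH.
have h2 := m _ _ (rc_prod r RP PG) (JFG i).
apply: e (a _ _ h1 h2) => x; rewrite !big_cons.
set A := \prod_(j <- r) F j x; set B := \prod_(j <- r) G j x.
ring.
Qed.

Lemma sc_sum (k : fieldType) (X : Type) (J : (X -> k) -> Prop) (I : Type)
  (r : seq I) (F : I -> X -> k) : fext J -> J (fun _ => 0) ->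
  (forall f g, J f -> J g -> J (fun x => f x + g x)) ->
  (forall i, J (F i)) -> J (fun x => \sum_(i <- r) F i x).
Proof.
move=> e z a HF; elim: r => [|i r IH].
  by apply: e z => x; rewrite big_nil.
by apply: e (a _ _ (HF i) IH) => x; rewrite big_cons.
Qed.


Definition cmap (k : fieldType) (S : falgType k) (X : Type)
  (P : (X -> k) -> Prop) (g : X -> S) := forall j, P (fun x => coords (g x) j).

Lemma coordsD (k : fieldType) (S : falgType k) (x y : S) j :
  coords (x + y) j = coords x j + coords y j.
Proof. by rewrite /coords linearD. Qed.

Lemma coordsZ (k : fieldType) (S : falgType k) (a : k) (x : S) j :
  coords (a *: x) j = a * coords x j.
Proof. by rewrite /coords linearZ. Qed.

Lemma coordsN (k : fieldType) (S : falgType k) (x : S) j :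
  coords (- x) j = - coords x j.
Proof. by rewrite /coords linearN. Qed.

Lemma coords_sum (k : fieldType) (S : falgType k) (I : Type) (r : seq I) (F : I -> S) j :
  coords (\sum_(i <- r) F i) j = \sum_(i <- r) coords (F i) j.
Proof. by rewrite /coords linear_sum. Qed.

Lemma coords_expand (k : fieldType) (S : falgType k) (x : S) :
  x = \sum_i coords x i *: (vbasis (@fullv k S))`_i.
Proof. exact: coord_vbasis (memvf x). Qed.

Lemma coords_mul (k : fieldType) (S : falgType k) (x y : S) m :
  coords (x * y) m = \sum_i \sum_j (coords x i * coords y j *
     coords ((vbasis (@fullv k S))`_i * (vbasis (@fullv k S))`_j) m).
Proof.
rewrite {1}(coords_expand x) {1}(coords_expand y) mulr_suml coords_sum.
apply: eq_bigr => i _; rewrite mulr_sumr coords_sum; apply: eq_bigr => j _.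
by rewrite -scalerAl -scalerAr scalerA coordsZ.
Qed.

Lemma pmap_mulG (k : fieldType) (S : falgType k) (X : Type)
  (A B C : (X -> k) -> Prop) (g h : X -> S) :
  fext C -> C (fun _ => 0) -> (forall f1 f2, C f1 -> C f2 -> C (fun x => f1 x + f2 x)) ->
  (forall f1 f2 a, A f1 -> B f2 -> C (fun x => f1 x * f2 x * a)) ->
  cmap A g -> cmap B h -> cmap C (fun x => g x * h x).
Proof.
move=> e z ad m Ag Bh j.
set bb := (vbasis (@fullv k S)).
have H : C (fun x => \sum_i \sum_l (coords (g x) i * coords (h x) l *
     coords (bb`_i * bb`_l) j)).
  apply: (@sc_sum _ _ _ _ (index_enum _) (fun i x => \sum_l (coords (g x) i * coords (h x) l *
     coords (bb`_i * bb`_l) j)) e z ad) => i.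
  apply: (@sc_sum _ _ _ _ (index_enum _) (fun l x => (coords (g x) i * coords (h x) l *
     coords (bb`_i * bb`_l) j)) e z ad) => l.
  exact: m.
by apply: e H => x; rewrite coords_mul.
Qed.

Lemma pmap_mul (k : fieldType) (S : falgType k) (X : Type)
  (P : (X -> k) -> Prop) (g h : X -> S) : rclosed P ->
  cmap P g -> cmap P h -> cmap P (fun x => g x * h x).
Proof.
move=> [e c a m]; apply: pmap_mulG => // f1 f2 b A1 A2.
exact: m (m _ _ A1 A2) (c b).
Qed.

Lemma pmap_mulPJ (k : fieldType) (S : falgType k) (X : Type)
  (P J : (X -> k) -> Prop) (g h : X -> S) : rclosed P -> iclosed P J ->
  cmap P g -> cmap J h -> cmap J (fun x => g x * h x).
Proof.
move=> [e c a m] [e' z a' m']; apply: pmap_mulG => // f1 f2 b A1 A2.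
apply: e' (m' _ _ (m _ _ A1 (c b)) A2) => x; ring.
Qed.

Lemma pmap_mulJP (k : fieldType) (S : falgType k) (X : Type)
  (P J : (X -> k) -> Prop) (g h : X -> S) : rclosed P -> iclosed P J ->
  cmap J g -> cmap P h -> cmap J (fun x => g x * h x).
Proof.
move=> [e c a m] [e' z a' m']; apply: pmap_mulG => // f1 f2 b A1 A2.
apply: e' (m' _ _ (m _ _ A2 (c b)) A1) => x; ring.
Qed.

Lemma pmap_cst (k : fieldType) (S : falgType k) (X : Type)
  (P : (X -> k) -> Prop) (s : S) : rclosed P -> cmap P (fun _ => s).
Proof. by move=> [e c a m] j; apply: c. Qed.

Lemma pmap_add (k : fieldType) (S : falgType k) (X : Type)
  (P J : (X -> k) -> Prop) (g h : X -> S) : iclosed P J ->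
  cmap J g -> cmap J h -> cmap J (fun x => g x + h x).
Proof.
move=> [e z a m] Pg Ph j; apply: e (a _ _ (Pg j) (Ph j)) => x.
by rewrite coordsD.
Qed.

Lemma pmap_scale (k : fieldType) (S : falgType k) (X : Type)
  (P J : (X -> k) -> Prop) (f : X -> k) (g : X -> S) : iclosed P J ->
  P f -> cmap J g -> cmap J (fun x => f x *: g x).
Proof.
move=> [e z a m] Pf Pg j; apply: e (m _ _ Pf (Pg j)) => x.
by rewrite coordsZ.
Qed.

Lemma pmap_opp (k : fieldType) (S : falgType k) (X : Type)
  (P J : (X -> k) -> Prop) (g : X -> S) : rclosed P -> iclosed P J ->
  cmap J g -> cmap J (fun x => - g x).
Proof.
move=> RP IJ Pg j; have [e _ _ _] := IJ.
apply: e (ic_neg RP IJ (Pg j)) => x.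
by rewrite coordsN.
Qed.

Lemma pmap_exp (k : fieldType) (S : falgType k) (X : Type)
  (P : (X -> k) -> Prop) (g : X -> S) i : rclosed P ->
  cmap P g -> cmap P (fun x => g x ^+ i).
Proof.
move=> RP Pg; have [e c a m] := RP; elim: i => [|i IH].
  by move=> j; apply: e (pmap_cst (S:=S) 1 RP j) => x; rewrite expr0.
by move=> j; apply: e (pmap_mul RP IH Pg j) => x; rewrite exprSr.
Qed.

Lemma pmap_expB (k : fieldType) (S : falgType k) (X : Type)
  (P J : (X -> k) -> Prop) (g h : X -> S) i : rclosed P -> iclosed P J ->
  cmap P g -> cmap P h -> cmap J (fun x => g x - h x) ->
  cmap J (fun x => g x ^+ i - h x ^+ i).
Proof.
move=> RP IJ Pg Ph Jgh; have [e z a m] := IJ; elim: i => [|i IH].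
  by move=> j; apply: e z => x; rewrite !expr0 subrr /coords linear0.
have h1 := pmap_mulJP RP IJ IH Pg.
have h2 := pmap_mulPJ RP IJ (pmap_exp i RP Ph) Jgh.
move=> j; apply: e (pmap_add IJ h1 h2 j) => x.
by rewrite !exprSr mulrBl mulrBr addrA subrK.
Qed.


Lemma det_P (k : fieldType) (X : Type) (P : (X -> k) -> Prop) m
  (A : X -> 'M[k]_m) : rclosed P -> (forall i j, P (fun x => A x i j)) ->
  P (fun x => \det (A x)).
Proof.
move=> RP HA; have [e c a mu] := RP.
have H := (@sc_sum _ _ _ _ (index_enum _)
   (fun (s : 'S_m) x => (-1) ^+ s * \prod_i A x i (s i)) e (c 0) a).
apply: e (H _) => [x|s]; first by [].
apply: mu; first exact: c.
exact: (@rc_prod _ _ _ _ (index_enum _) (fun i x => A x i (s i))).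
Qed.

Lemma det_J (k : fieldType) (X : Type) (P J : (X -> k) -> Prop) m
  (A B : X -> 'M[k]_m) : rclosed P -> iclosed P J ->
  (forall i j, P (fun x => A x i j)) -> (forall i j, P (fun x => B x i j)) ->
  (forall i j, J (fun x => A x i j - B x i j)) ->
  J (fun x => \det (A x) - \det (B x)).
Proof.
move=> RP IJ HA HB HAB; have [e c a mu] := RP; have [e' z a' m'] := IJ.
have H := @sc_sum _ _ _ _ (index_enum _)
   (fun (s : 'S_m) x => (-1) ^+ s * (\prod_i A x i (s i) - \prod_i B x i (s i))) e' z a'.
apply: e' (H _) => [x|s].
  by rewrite /determinant -sumrB; apply: eq_bigr => s _; rewrite mulrBr.
apply: m'; first exact: c.
exact: (@ic_prodB _ _ _ _ _ (index_enum _) (fun i x => A x i (s i))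
   (fun i x => B x i (s i)) RP IJ).
Qed.

Lemma coords_eq0 (k : fieldType) (S : falgType k) (x : S) :
  (forall j, coords x j = 0) -> x = 0.
Proof.
move=> H; rewrite (coords_expand x) big1 // => i _.
by rewrite H scale0r.
Qed.

Lemma basis_det (k : fieldType) (S : falgType k) (f : 'I_(\dim {:S}) -> S) :
  basis_of fullv [seq f i | i <- enum 'I_(\dim {:S})] =
  (\det (\matrix_(i, j) coords (f i) j) != 0).
Proof.
set n := \dim {:S}; set M := \matrix_(i, j) coords (f i) j.
rewrite basisEfree subvf size_map size_enum_ord leqnn !andbT.
have -> : [seq f i | i <- enum 'I_n] = [tuple f i | i < n] by [].
have nthX : forall i : 'I_n, [tuple f i | i < n]`_i = f i.
  by move=> i; rewrite -tnth_nth tnth_mktuple.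
rewrite -unitfE -unitmxE -row_free_unit -kermx_eq0.
apply/freeP/rowV0P => [Hfree r /sub_kermxP rM0 | Hker lam Hlam].
  apply/rowP => i; rewrite mxE; apply: (Hfree (fun i => r 0 i)) => //.
  apply: coords_eq0 => j.
  rewrite coords_sum [RHS](_ : _ = (r *m M) 0 j); last by rewrite rM0 mxE.
  rewrite mxE; apply: eq_bigr => l _; by rewrite nthX coordsZ mxE.
have r0 : \row_i lam i = 0.
  apply: Hker; apply/sub_kermxP; apply/rowP => j; rewrite !mxE.
  transitivity (coords (\sum_(i < n) lam i *: [tuple f i | i < n]`_i) j).
    rewrite coords_sum; apply: eq_bigr => l _; by rewrite nthX coordsZ !mxE.
  by rewrite Hlam /coords linear0.
by move=> i; have := congr1 (fun r : 'rV[k]_n => r 0 i) r0; rewrite !mxE.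
Qed.


Lemma distinct_seq (k : fieldType) : infinite_field k ->
  forall m, exists s : seq k, uniq s /\ size s = m.
Proof.
move=> kinf; elim=> [|m [s [us ss]]]; first by exists [::].
have [x xs] := kinf s; exists (x :: s); by rewrite /= xs us ss.
Qed.

Lemma poly_nz_pt (k : fieldType) (p : {poly k}) : infinite_field k ->
  p != 0 -> exists v, p.[v] != 0.
Proof.
move=> kinf pn0; have [s [us ss]] := distinct_seq kinf (size p).
have /allPn [x _ rx] : ~~ all (root p) s.
  by apply/negP => H; have := max_poly_roots pn0 H us; rewrite ss ltnn.
by exists x.
Qed.

Lemma poly_fun_eq (k : fieldType) (p q : {poly k}) : infinite_field k ->
  (forall v, p.[v] = q.[v]) -> p = q.
Proof.
move=> kinf H; apply/eqP; rewrite -subr_eq0; apply/negPn/negP => nz.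
have [v] := poly_nz_pt kinf nz; by rewrite hornerD hornerN H subrr eqxx.
Qed.

Definition PS (k : fieldType) (S : falgType k) (f : S -> k) :=
  exists p : {mpoly k[\dim {:S}]}, forall x, f x = p.@[coords x].

Lemma PS_rc (k : fieldType) (S : falgType k) : rclosed (@PS k S).
Proof.
split.
- by move=> f g fg [p Hp]; exists p => x; rewrite -fg.
- by move=> a; exists a%:MP => x; rewrite mevalC.
- by move=> f g [p Hp] [q Hq]; exists (p + q) => x; rewrite mevalD Hp Hq.
- by move=> f g [p Hp] [q Hq]; exists (p * q) => x; rewrite mevalM Hp Hq.
Qed.

Lemma PS_id (k : fieldType) (S : falgType k) : cmap (@PS k S) id.
Proof. by move=> j; exists 'X_j => x; rewrite mevalXU. Qed.

Definition Pk (k : fieldType) (f : k -> k) := exists p : {poly k}, forall v, f v = p.[v].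
Definition Jk (k : fieldType) (M : nat) (f : k -> k) :=
  exists p : {poly k}, forall v, f v = v ^+ M * p.[v].

Lemma Pk_rc (k : fieldType) : rclosed (@Pk k).
Proof.
split.
- by move=> f g fg [p Hp]; exists p => x; rewrite -fg.
- by move=> a; exists a%:P => x; rewrite hornerC.
- by move=> f g [p Hp] [q Hq]; exists (p + q) => x; rewrite hornerD Hp Hq.
- by move=> f g [p Hp] [q Hq]; exists (p * q) => x; rewrite hornerM Hp Hq.
Qed.

Lemma Jk_ic (k : fieldType) M : iclosed (@Pk k) (Jk M).
Proof.
split.
- by move=> f g fg [p Hp]; exists p => x; rewrite -fg.
- by exists 0 => x; rewrite horner0 mulr0.
- by move=> f g [p Hp] [q Hq]; exists (p + q) => x; rewrite hornerD Hp Hq mulrDr.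
- move=> f g [p Hp] [q Hq]; exists (p * q) => x; rewrite hornerM Hp Hq.
  by rewrite mulrCA.
Qed.

Lemma Pk_exp (k : fieldType) i : Pk (fun v : k => v ^+ i).
Proof. by exists 'X^i => v; rewrite hornerXn. Qed.

Lemma pmap_sum (k : fieldType) (S : falgType k) (X : Type)
  (P J : (X -> k) -> Prop) (I : Type) (r : seq I) (F : I -> X -> S) :
  iclosed P J -> (forall i, cmap J (F i)) -> cmap J (fun x => \sum_(i <- r) F i x).
Proof.
move=> [e z a m] HF j.
have H := @sc_sum _ _ _ _ r (fun i x => coords (F i x) j) e z a (fun i => HF i j).
by apply: e H => x; rewrite coords_sum.
Qed.

Lemma horner_algE (k : fieldType) (S : falgType k) (t : S) (q : {poly k}) :
  horner_alg t q = \sum_(i < size q) q`_i *: t ^+ i.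
Proof.
rewrite /horner_alg /horner_morph horner_coef size_map_poly.
by apply: eq_bigr => i _; rewrite coef_map /= mulr_algl.
Qed.

Lemma pmap_horner (k : fieldType) (S : falgType k) (s : S) (q : {poly k}) :
  cmap (@Pk k) (fun v => horner_alg (v *: s) q).
Proof.
have IC := rc_ic (@Pk_rc k).
have H : cmap (@Pk k) (fun v => \sum_(i < size q) (q`_i * v ^+ i) *: s ^+ i).
  apply: (pmap_sum _ IC) => i; apply: (pmap_scale IC).
    by have h := (rc_mul (@Pk_rc k) (rc_cst (@Pk_rc k) q`_i) (Pk_exp k i)); exact: h.
  exact: pmap_cst (@Pk_rc k).
move=> j; have [e _ _ _] := IC; apply: e (H j) => v.
rewrite horner_algE; congr coords; apply: eq_bigr => i _.
by rewrite exprZn scalerA.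
Qed.


Lemma sqrt_trunc (k : fieldType) : (2%:R : k) != 0 -> forall M : nat,
  exists sg rh : {poly k}, sg * sg = 1 + 'X + 'X^(M.+1) * rh /\ sg.[0] = 1.
Proof.
move=> two; elim=> [|M [sg [rh [Hs H0]]]].
  by exists 1, (-1); split; [rewrite expr1; ring | rewrite hornerC].
set r0 := rh.[0]; set d := r0 / 2%:R.
have hr : r0 = 2%:R * d by rewrite /d mulrC divfK.
have : root (rh - r0 *: sg) 0.
  by rewrite /root hornerD hornerN hornerZ H0 mulr1 subrr.
case/factor_theorem => q Hq.
exists (sg - d%:P * 'X^(M.+1)), (q + (d * d)%:P * 'X^M); split; last first.
  by rewrite !hornerE /= H0 expr0n /= mulr0 subr0.
have eX : 'X^(M.+1) = 'X * 'X^M :> {poly k} by rewrite exprS.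
have eX2 : 'X^(M.+2) = 'X * 'X * 'X^M :> {poly k} by rewrite !exprS mulrA.
have eR : rh = (2%:R * d)%:P * sg + q * 'X.
  by rewrite -hr mul_polyC -[rh](subrK (r0 *: sg)) Hq polyC0 subr0 addrC.
have e1 : 1 + 'X = sg * sg - 'X^(M.+1) * rh by rewrite Hs addrK.
rewrite eX2 e1 eR eX polyCM !polyCM.
rewrite (_ : (2%:R : k)%:P = 2%:R); last by rewrite rmorph_nat.
set Z := 'X^M; set X := 'X; set D := d%:P.
ring.
Qed.


Definition Dm (k : fieldType) (S : falgType k) (y : S) : k :=
  \det (\matrix_(i < \dim {:S}, j < \dim {:S}) coords (y ^+ i) j).

Definition Nm (k : fieldType) (S : falgType k) (s : S) : k :=
  \det (\matrix_(i < \dim {:S}, j < \dim {:S}) coords (s * (vbasis (@fullv k S))`_i) j) *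
  \det (\matrix_(i < \dim {:S}, j < \dim {:S}) coords ((vbasis (@fullv k S))`_i * s) j).

Lemma Dm_P (k : fieldType) (S : falgType k) (X : Type) (P : (X -> k) -> Prop)
  (g : X -> S) : rclosed P -> cmap P g -> P (fun x => Dm (g x)).
Proof.
move=> RP Pg; have RP2 := RP; apply: det_P RP2 _ => i j.
have [e _ _ _] := RP; apply: e (pmap_exp i RP Pg j) => x; by rewrite mxE.
Qed.

Lemma Dm_J (k : fieldType) (S : falgType k) (X : Type) (P J : (X -> k) -> Prop)
  (g h : X -> S) : rclosed P -> iclosed P J -> cmap P g -> cmap P h ->
  cmap J (fun x => g x - h x) -> J (fun x => Dm (g x) - Dm (h x)).
Proof.
move=> RP IJ Pg Ph Jgh; have RP2 := RP; have IJ2 := IJ; apply: det_J RP2 IJ2 _ _ _ => i j.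
- have [e _ _ _] := RP; apply: e (pmap_exp i RP Pg j) => x; by rewrite mxE.
- have [e _ _ _] := RP; apply: e (pmap_exp i RP Ph j) => x; by rewrite mxE.
- have [e _ _ _] := IJ; apply: e (pmap_expB i RP IJ Pg Ph Jgh j) => x.
  by rewrite !mxE coordsD coordsN.
Qed.

Lemma prim_Dm (k : fieldType) (S : falgType k) (y : S) :
  y \is a GRing.unit -> primitive y = (Dm y != 0).
Proof.
move=> yu; rewrite /primitive yu /=.
have -> : [seq y ^+ i | i <- iota 0 (\dim {:S})] =
          [seq (fun i : 'I_(\dim {:S}) => y ^+ i) i | i <- enum 'I_(\dim {:S})].
  by rewrite -val_enum_ord -map_comp.
exact: basis_det.
Qed.

Lemma one_in_basis (k : fieldType) (S : falgType k) (f : 'I_(\dim {:S}) -> S) :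
  basis_of fullv [seq f i | i <- enum 'I_(\dim {:S})] ->
  exists lam : 'I_(\dim {:S}) -> k, \sum_i lam i *: f i = 1.
Proof.
set X := [tuple f i | i < \dim {:S}].
have -> : [seq f i | i <- enum 'I_(\dim {:S})] = X by [].
move=> B; have sp := span_basis B.
have h1 : (1 : S) \in <<X>>%VS by rewrite sp memvf.
exists (fun i => coord X i 1); rewrite [RHS](coord_span h1).
by apply: eq_bigr => i _; rewrite -tnth_nth tnth_mktuple.
Qed.

Lemma Nm_unit (k : fieldType) (S : falgType k) (s : S) : Nm s != 0 -> s \is a GRing.unit.
Proof.
rewrite /Nm mulf_eq0 negb_or => /andP [d1 d2].
have b1 := basis_det (fun i => s * (vbasis (@fullv k S))`_i).
have b2 := basis_det (fun i => (vbasis (@fullv k S))`_i * s).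
rewrite d1 in b1; rewrite d2 in b2.
have [l1 H1] := one_in_basis b1; have [l2 H2] := one_in_basis b2.
set x := \sum_i l1 i *: (vbasis (@fullv k S))`_i.
set y := \sum_i l2 i *: (vbasis (@fullv k S))`_i.
have sx : s * x = 1.
  by rewrite -H1 /x mulr_sumr; apply: eq_bigr => i _; rewrite scalerAr.
have ys : y * s = 1.
  by rewrite -H2 /y mulr_suml; apply: eq_bigr => i _; rewrite scalerAl.
apply/unitrP; exists x; split => //.
by rewrite -[x]mul1r -ys -mulrA sx mulr1.
Qed.


Lemma horner_alg0 (k : fieldType) (S : falgType k) (q : {poly k}) :
  horner_alg (0 : S) q = q.[0]%:A.
Proof.
by rewrite /horner_alg /horner_morph [LHS]horner_coef0 horner_coef0 coef_map_id0 // rmorph0.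
Qed.

Lemma Nm1 (k : fieldType) (S : falgType k) : Nm (1 : S) = 1.
Proof.
have free_b := basis_free (vbasisP (@fullv k S)).
rewrite /Nm.
have -> : \matrix_(i < \dim {:S}, j < \dim {:S}) coords (1 * (vbasis (@fullv k S))`_i) j = 1%:M.
  by apply/matrixP => i j; rewrite !mxE mul1r /coords coord_free.
have -> : \matrix_(i < \dim {:S}, j < \dim {:S}) coords ((vbasis (@fullv k S))`_i * 1) j = 1%:M.
  by apply/matrixP => i j; rewrite !mxE mulr1 /coords coord_free.
by rewrite det1 mulr1.
Qed.

Lemma exists_good (k : fieldType) (S : falgType k)
  (k_inf : infinite_field k) (two : (2%:R : k) != 0)
  (a c : S) (c_unit : c \is a GRing.unit) (Da : Dm a != 0) :
  exists b : S, (b \is a GRing.unit) && (Dm (c * (b * b)) != 0).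
Proof.
have RP := @Pk_rc k; have IC := rc_ic RP.
set w := a - c; set e := c^-1 * w.
pose g2 := fun v : k => c + v *: w.
have Pid : Pk (fun v : k => v) by exists 'X => v; rewrite hornerX.
have Pg2 : cmap (@Pk k) g2.
  apply: (pmap_add IC); first exact: pmap_cst.
  exact: (pmap_scale IC Pid (pmap_cst _ RP)).
have [p Hp] := Dm_P RP Pg2.
have [sg [rh [Hs H0]]] := sqrt_trunc two (size p).
set M := (size p).+1.
pose b := fun v : k => horner_alg (v *: e) sg.
pose g1 := fun v : k => c * (b v * b v).
pose z := fun v : k => c * e ^+ M * horner_alg (v *: e) rh.
have key : forall v, g1 v - g2 v = v ^+ M *: z v.
  move=> v; rewrite /g1 /g2 /b /z -rmorphM Hs !rmorphD rmorph1 rmorphM /=.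
  rewrite rmorphXn /= !horner_algX exprZn.
  have ce : c * (v *: e) = v *: w by rewrite -scalerAr /e mulVKr.
  rewrite mulrDr mulrDr mulr1 ce -!scalerAl -!scalerAr -!mulrA.
  by rewrite addrAC subrr add0r.
have Pb : cmap (@Pk k) b by exact: pmap_horner.
have Pg1 : cmap (@Pk k) g1.
  by apply: (pmap_mul RP (pmap_cst _ RP)); apply: (pmap_mul RP Pb Pb).
have Pz : cmap (@Pk k) z.
  by apply: (pmap_mul RP (pmap_cst _ RP)); exact: pmap_horner.
have Jd : cmap (Jk M) (fun v => g1 v - g2 v).
  move=> j; have [q Hq] := Pz j; exists q => v.
  by rewrite key coordsZ Hq.
have [r Hr] := Dm_J RP (Jk_ic k M) Pg1 Pg2 Jd.
have [q1 Hq1] := Dm_P RP Pg1.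
have PN : Pk (fun v => Nm (b v)).
  apply: (rc_mul RP).
    apply: (det_P RP) => i j; have [e' _ _ _] := RP.
    apply: e' (pmap_mul RP Pb (pmap_cst _ RP) j) => v; by rewrite mxE.
  apply: (det_P RP) => i j; have [e' _ _ _] := RP.
  apply: e' (pmap_mul RP (pmap_cst _ RP) Pb j) => v; by rewrite mxE.
have [q2 Hq2] := PN.
have q2n0 : q2 != 0.
  apply/eqP => q20; have := Hq2 0; rewrite q20 horner0 /b scale0r horner_alg0 H0.
  by rewrite scale1r Nm1 => /eqP; rewrite oner_eq0.
have q1n0 : q1 != 0.
  apply/eqP => q10.
  have pE : p = - ('X^M * r).
    apply: (poly_fun_eq k_inf) => v.
    by rewrite -Hp hornerN hornerM hornerXn -Hr (Hq1 v) q10 horner0 sub0r opprK.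
  have [r0|rn0] := eqVneq r 0.
    move: Da; rewrite pE r0 mulr0 oppr0 in Hp.
    have := Hp 1; rewrite horner0 /g2 scale1r /w addrC subrK => ->.
    by rewrite eqxx.
  have := congr1 (fun q : {poly k} => size q) pE; rewrite size_opp mulrC size_mulXn //.
  move=> h; have : (size p < M)%N by [].
  by rewrite [in X in (X < _)%N]h /M ltnNge leq_addr.
have [v] := poly_nz_pt k_inf (mulf_neq0 q1n0 q2n0).
rewrite hornerM mulf_eq0 negb_or -Hq1 -Hq2 => /andP [d1 d2].
by exists (b v); rewrite Nm_unit.
Qed.


Unset Implicit Arguments.

Theorem lemma3p3 (k : fieldType) (S : falgType k)
  (k_inf : infinite_field k) (k_char : 2%N \notin [pchar k])
  (S_simple : simple_ext S) (c : S) (c_unit : c \is a GRing.unit) :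
  let V := fun b : S => (b \is a GRing.unit) && primitive (c * b ^+ 2) in
  (exists b : S, V b) /\ open_in_units (fun b => V b).
Proof.
move=> V; split.
  have two : (2%:R : k) != 0.
    apply: contra k_char => h2; by rewrite inE /= h2.
  have [a /andP [ua ba]] := S_simple.
  have Da : Dm a != 0 by rewrite -prim_Dm // /primitive ua ba.
  have [b /andP [bu Db]] := exists_good k_inf two c_unit Da.
  exists b; rewrite /V bu /= GRing.expr2 prim_Dm //.
  by rewrite GRing.unitrMr // GRing.unitrMr.
have H : cmap (@PS k S) (fun x => c * x ^+ 2).
  apply: (pmap_mul (PS_rc S) (pmap_cst _ (PS_rc S))).
  exact: (pmap_exp 2 (PS_rc S) (@PS_id k S)).
have [p0 Hp0] := Dm_P (PS_rc S) H.
exists (fun x => p0.@[coords x] != 0); split.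
  exists (fun p => p = p0) => x; split => [h|[p [-> h]]] //; by exists p0.
move=> x xu; rewrite /V xu /= prim_Dm ?GRing.unitrMr // Hp0.
by split.
Qed.
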